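(* Let $\rho$ be a probability distribution on $\mathcal S$ with $\min_i\rho_i>0$. Suppose $Y=(S,B,S')$ is random with $S\sim\rho$, $\mathbb P(S'=j\mid S=i)=P_{ij}$ and $B\mid(S=i,S'=j)\sim\nu_{ij}$ for all $i,j\in\mathcal S$. Then $\mathbb E[H(p,Y)]=h_\rho(p)$ for all $p\in\Delta_d^{\mathcal S}$ (expectation taken coordinatewise), $h_\rho$ is non-expansive in $\ell^\Theta_{\mathrm C,\infty}$, and $\mathrm{fix}(h_\rho)=\mathrm{fix}(\mathcal G)$. In particular, these conclusions hold with $\rho=\mu$.
   Context: Finite MDP with state set $\mathcal{S}=\{1,\dots,m\}$, finite action set, deterministic rewards in $[0,1]$, fixed policy inducing a transition matrix $P=(P_{ij})$ on $\mathcal S$ that is irreducible and aperiodic with stationary distribution $\mu$. $R_{ij}$ is the finite-valued random one-step reward conditioned on transition $i\to j$; gain $\bar r^\pi=\sum_i\mu_i\sum_jP_{ij}\mathbb E[R_{ij}]$; $\nu_{ij}:=\mathrm{Law}(R_{ij}-\bar r^\pi)$. $\Theta=\{\theta_1<\dots<\theta_d\}$ with constant stride $\Delta>0$; $\Delta_d$ the probability simplex of $\mathbb R^d$; $\Delta_d^{\mathcal S}$ families $(p_i)_{i\in\mathcal S}$ with $p_i\in\Delta_d$. For $u\in\Delta_d$, $\eta^{u,0}:=\sum_ku_k\delta_{\theta_k}$. Categorical projection $\Pi^\Theta_{\mathrm C}$: $\delta_x\mapsto\delta_{\theta_1}$ if $x\le\theta_1$, $\delta_{\theta_d}$ if $x\ge\theta_d$,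 $\frac{\theta_{k+1}-x}{\Delta}\delta_{\theta_k}+\frac{x-\theta_k}{\Delta}\delta_{\theta_{k+1}}$ if $\theta_k\le x\le\theta_{k+1}$, extended linearly to probability laws. For $b\in\mathbb R$, $L_bu\in\Delta_d$ is defined by $\Pi^\Theta_{\mathrm C}(\text{law of }X+b,\ X\sim\eta^{u,0})=\eta^{L_bu,0}$. $\mathcal G(p)$ is the unique $q\in\Delta_d^{\mathcal S}$ with $\eta^{q_i,0}=\Pi^\Theta_{\mathrm C}\bigl(\sum_jP_{ij}(\nu_{ij}\ast\eta^{p_j,0})\bigr)$ for all $i$. One-sample backup: for $y=(s,b,s')\in\mathcal S\times[-1,1]\times\mathcal S$, $H(p,y)=q$ with $q_u=p_u$ ($u\ne s$), $q_s=L_bp_{s'}$. Mean-field map $h_\rho(p)_i:=(1-\rho_i)p_i+\rho_i\mathcal G(p)_i$, i.e. $h_\rho(p)=p+D_\rho(\mathcal G(p)-p)$ with $D_\rho=\mathrm{diag}(\rho)$. $\mathrm{fix}(F)$ is the fixed-point set of $F$. Coordinate Cramér metric: $F_u(\theta_k):=\sum_{j\le k}u_j$, $\ell^\Theta_{\mathrm C}(u,v)^2:=\Delta\sum_{k=1}^{d-1}(F_u(\theta_k)-F_v(\theta_k))^2$, $\ell^\Theta_{\mathrm C,\infty}(p,q):=\max_i\ell^\Theta_{\mathrm C}(p_i,q_i)$. *)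

(* Defs.v *)
From HB Require Import structures.
From mathcomp Require Import all_boot all_order all_algebra.
From mathcomp Require Import reals.
Set Implicit Arguments. Unset Strict Implicit. Unset Printing Implicit Defensive.
Import Order.TTheory GRing.Theory Num.Theory.
Local Open Scope ring_scope.

Section Prop5Defs.
Variable R : realType.

Definition prob_vec (n : nat) (u : 'I_n -> R) :=
  (forall i, 0 <= u i) /\ \sum_i u i = 1.

Definition stochastic (m : nat) (P : 'M[R]_m) :=
  (forall i j, 0 <= P i j) /\ (forall i, \sum_j P i j = 1).

Definition irreducible (m : nat) (P : 'M[R]_m) :=
  forall i j : 'I_m, exists n : nat, 0 < (P ^+ n) i j.

Definition aperiodic (m : nat) (P : 'M[R]_m) :=
  forall (i : 'I_m) (k : nat),
    (forall n : nat, (0 < n)%N -> 0 < (P ^+ n) i i -> (k %| n)%N) -> k = 1%N.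

Definition stationary (m : nat) (P : 'M[R]_m) (mu : 'I_m -> R) :=
  prob_vec mu /\ (forall j, \sum_i mu i * P i j = mu j).

Definition fin_law (f : R -> R) (s : seq R) :=
  [/\ uniq s, (forall x, x \notin s -> f x = 0), (forall x, 0 <= f x)
    & \sum_(x <- s) f x = 1].

Definition mean (f : R -> R) (s : seq R) : R := \sum_(x <- s) x * f x.

Definition gain (m : nat) (P : 'M[R]_m) (mu : 'I_m -> R)
  (f : 'I_m -> 'I_m -> R -> R) (s : 'I_m -> 'I_m -> seq R) : R :=
  \sum_i mu i * \sum_j P i j * mean (f i j) (s i j).

(* nu_ij = Law(R_ij - rbar): mass function and support *)
Definition nu_mass (f : R -> R) (rbar : R) : R -> R := fun b => f (b + rbar).
Definition nu_supp (s : seq R) (rbar : R) : seq R := map (fun x => x - rbar) s.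

(* ---------- grid Theta = {theta_1 < ... < theta_d}, stride Delta;
   indexed from 0: theta_(k) = theta0 + k * Delta ---------- *)
Definition grid (theta0 Delta : R) (k : nat) : R := theta0 + k%:R * Delta.

(* weight put on the atom theta_k by the categorical projection of delta_x *)
Definition cproj_w (d : nat) (theta0 Delta : R) (x : R) (k : 'I_d) : R :=
  let th := grid theta0 Delta in
  if x <= th 0%N then ((k : nat) == 0%N)%:R
  else if th d.-1 <= x then ((k : nat) == d.-1)%:R
  else (if (th k <= x) && (x < th k.+1) then (th k.+1 - x) / Delta else 0)
     + (if [&& (0 < k)%N, th k.-1 <= x & x < th k]
        then (x - th k.-1) / Delta else 0).

(* L_b u : Pi_C(law of X + b, X ~ eta^{u,0}) = eta^{L_b u, 0} *)
Definition Lb (d : nat) (theta0 Delta b : R) (u : 'I_d -> R) : 'I_d -> R :=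
  fun k => \sum_(l < d) u l * cproj_w theta0 Delta (grid theta0 Delta l + b) k.

(* G(p)_i = Pi_C( sum_j P_ij (nu_ij * eta^{p_j,0}) ) *)
Definition Gop (m d : nat) (theta0 Delta : R) (P : 'M[R]_m)
  (nuf : 'I_m -> 'I_m -> R -> R) (nus : 'I_m -> 'I_m -> seq R)
  (p : 'I_m -> 'I_d -> R) : 'I_m -> 'I_d -> R :=
  fun i k => \sum_j P i j * \sum_(b <- nus i j) \sum_(l < d)
     nuf i j b * p j l * cproj_w theta0 Delta (b + grid theta0 Delta l) k.

Definition Hbackup (m d : nat) (theta0 Delta : R) (p : 'I_m -> 'I_d -> R)
  (y : 'I_m * R * 'I_m) : 'I_m -> 'I_d -> R :=
  let: (s, b, s') := y in
  fun u => if u == s then Lb theta0 Delta b (p s') else p u.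

Definition hrho (m d : nat) (theta0 Delta : R) (P : 'M[R]_m)
  (nuf : 'I_m -> 'I_m -> R -> R) (nus : 'I_m -> 'I_m -> seq R)
  (rho : 'I_m -> R) (p : 'I_m -> 'I_d -> R) : 'I_m -> 'I_d -> R :=
  fun i k => (1 - rho i) * p i k + rho i * Gop theta0 Delta P nuf nus p i k.

Definition simplexS (m d : nat) (p : 'I_m -> 'I_d -> R) :=
  forall i, prob_vec (p i).

Definition is_fix (m d : nat) (F : ('I_m -> 'I_d -> R) -> 'I_m -> 'I_d -> R)
  (p : 'I_m -> 'I_d -> R) := forall i k, F p i k = p i k.

Definition cdf (d : nat) (u : 'I_d -> R) (k : 'I_d) : R :=
  \sum_(j < d | (j <= k)%N) u j.
Definition lC (d : nat) (Delta : R) (u v : 'I_d -> R) : R :=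
  Num.sqrt (Delta * \sum_(k < d | (k < d.-1)%N) (cdf u k - cdf v k) ^+ 2).
Definition lCinf (m d : nat) (Delta : R) (p q : 'I_m -> 'I_d -> R) : R :=
  \big[Num.max/0]_(i < m) lC Delta (p i) (q i).

(* law of Y = (S, B, S'): finitely supported mass function qY with support sY,
   with S ~ rho, P(S'=j | S=i) = P_ij, B | (S=i, S'=j) ~ nu_ij, i.e.
   P(S=i, B=b, S'=j) = rho_i P_ij nu_ij({b}). *)
Definition Y_law (m : nat) (rho : 'I_m -> R) (P : 'M[R]_m)
  (nuf : 'I_m -> 'I_m -> R -> R)
  (qY : 'I_m * R * 'I_m -> R) (sY : seq ('I_m * R * 'I_m)) :=
  [/\ uniq sY, (forall y, y \notin sY -> qY y = 0), (forall y, 0 <= qY y),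
      \sum_(y <- sY) qY y = 1
    & forall i b j, qY (i, b, j) = rho i * P i j * nuf i j b].

Definition EH (m d : nat) (theta0 Delta : R) (qY : 'I_m * R * 'I_m -> R)
  (sY : seq ('I_m * R * 'I_m)) (p : 'I_m -> 'I_d -> R) : 'I_m -> 'I_d -> R :=
  fun u k => \sum_(y <- sY) qY y * Hbackup theta0 Delta p y u k.

Definition prop5_concl (m d : nat) (theta0 Delta : R) (P : 'M[R]_m)
  (nuf : 'I_m -> 'I_m -> R -> R) (nus : 'I_m -> 'I_m -> seq R)
  (rho : 'I_m -> R) :=
  [/\ (forall qY sY, Y_law rho P nuf qY sY ->
        forall p : 'I_m -> 'I_d -> R, simplexS p ->
        forall u k, EH theta0 Delta qY sY p u k
                    = hrho theta0 Delta P nuf nus rho p u k),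
      (forall p q : 'I_m -> 'I_d -> R, simplexS p -> simplexS q ->
        lCinf Delta (hrho theta0 Delta P nuf nus rho p)
                    (hrho theta0 Delta P nuf nus rho q)
        <= lCinf Delta p q)
    & (forall p : 'I_m -> 'I_d -> R, simplexS p ->
        (is_fix (hrho theta0 Delta P nuf nus rho) p
         <-> is_fix (Gop theta0 Delta P nuf nus) p))].

End Prop5Defs.

(* Main.v *)
From HB Require Import structures.
From mathcomp Require Import all_boot all_order all_algebra.
From mathcomp Require Import reals.
From mathcomp Require Import ring lra.
Require Import Defs.
Set Implicit Arguments. Unset Strict Implicit. Unset Printing Implicit Defensive.
Import Order.TTheory GRing.Theory Num.Theory.
Local Open Scope ring_scope.

Ltac hcond c := match c with ?a && ?b => hcond a | (?a <= ?b)%R => case: (leP a b) => ? | (?a < ?b)%R => case: (ltP a b) => ? end.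
Ltac hsplit := repeat (match goal with |- context [if ?c then _ else _] => hcond c end; rewrite ?andbT ?andbF ?andTb ?andFb /=).

Definition hcl (R : realType) (z : R) : R := if z <= 0 then 0 else if z <= 1 then z else 1.

Lemma hcl_ge0 (R : realType) (z : R) : 0 <= hcl z.
Proof. rewrite /hcl; hsplit; lra. Qed.
Lemma hcl_le1 (R : realType) (z : R) : hcl z <= 1.
Proof. rewrite /hcl; hsplit; lra. Qed.
Lemma hcl_mono (R : realType) (z1 z2 : R) : z1 <= z2 -> hcl z1 <= hcl z2.
Proof. rewrite /hcl => H; hsplit; lra. Qed.

Lemma gridS (R : realType) (t0 D : R) j : grid t0 D j.+1 = grid t0 D j + D.
Proof. by rewrite /grid -addn1 natrD; ring. Qed.

Lemma inner_eq (R : realType) (t0 D x : R) (j : nat) : 0 < D -> grid t0 D 0 < x ->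
  (if (grid t0 D j <= x) && (x < grid t0 D j.+1) then (grid t0 D j.+1 - x) / D else 0)
+ (if [&& (0 < j)%N, grid t0 D j.-1 <= x & x < grid t0 D j]
        then (x - grid t0 D j.-1) / D else 0)
 = hcl ((grid t0 D j.+1 - x) / D) - hcl ((grid t0 D j - x) / D).
Proof.
move=> D0 x0.
rewrite gridS.
set t := grid t0 D j.
set z := (t - x) / D.
have ex : x = t - z * D by rewrite /z; field; rewrite gt_eqF.
have c1 : (t <= x) = (z <= 0).
  by rewrite ex; apply/idP/idP => H; nra.
have c2 : (x < t + D) = (-1 < z).
  by rewrite ex; apply/idP/idP => H; nra.
have c4 : (x < t) = (0 < z).
  by rewrite ex; apply/idP/idP => H; nra.
have e1 : (t + D - x) / D = z + 1 by rewrite ex; field; rewrite gt_eqF.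
rewrite c1 c2 c4 e1.
have zn : j = 0%N -> z < 0.
  move=> j0; by rewrite /z pmulr_llt0 ?invr_gt0 // subr_lt0 /t j0.
have tm : (0 < j)%N -> grid t0 D j.-1 = t - D.
  have tm' : forall i, (0 < i)%N -> grid t0 D i.-1 = grid t0 D i - D.
    by case=> // i _; rewrite gridS /=; ring.
  exact: tm'.
clearbody t z.
case: j zn tm => [|j] zn tm /=.
  have := zn erefl => {}zn.
  rewrite /hcl; hsplit; lra.
have {}tm := tm erefl.
have c3 : (t - D <= x) = (z <= 1).
  by rewrite ex; apply/idP/idP => H; nra.
have e2 : (x - (t - D)) / D = 1 - z by rewrite ex; field; rewrite gt_eqF.
rewrite tm c3 e2.
rewrite /hcl; hsplit; lra.
Qed.

Definition cwn (R : realType) (d : nat) (theta0 Delta : R) (x : R) (k : nat) : R :=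
  let th := grid theta0 Delta in
  if x <= th 0%N then (k == 0%N)%:R
  else if th d.-1 <= x then (k == d.-1)%:R
  else (if (th k <= x) && (x < th k.+1) then (th k.+1 - x) / Delta else 0)
     + (if [&& (0 < k)%N, th k.-1 <= x & x < th k]
        then (x - th k.-1) / Delta else 0).

Lemma cw_cwn (R : realType) (d : nat) (t0 D x : R) (k : 'I_d) :
  cproj_w t0 D x k = cwn d t0 D x k.
Proof. by []. Qed.

Lemma hcl0 (R : realType) (z : R) : z <= 0 -> hcl z = 0.
Proof. by rewrite /hcl => ->. Qed.
Lemma hcl1 (R : realType) (z : R) : 1 <= z -> hcl z = 1.
Proof. rewrite /hcl => H; hsplit; lra. Qed.

Lemma grid_mono (R : realType) (t0 D : R) (a b : nat) : 0 < D -> (a <= b)%N ->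
  grid t0 D a <= grid t0 D b.
Proof.
move=> D0 ab; rewrite /grid lerD2l ler_pM2r // ler_nat //.
Qed.

Lemma W_eq (R : realType) (d : nat) (t0 D x : R) (k : nat) : 0 < D -> (k.+1 < d)%N ->
  \sum_(j < k.+1) cwn d t0 D x j = hcl ((grid t0 D k.+1 - x) / D).
Proof.
move=> D0 kd.
have [x0|x0] := leP x (grid t0 D 0).
  rewrite (eq_bigr (fun i : 'I_k.+1 => ((i:nat) == 0%N)%:R)); last by move=> i _; rewrite /cwn x0.
  rewrite big_ord_recl /= big1 ?addr0; last by move=> i _.
  rewrite hcl1 // ler_pdivlMr // mul1r.
  have : grid t0 D 1 <= grid t0 D k.+1 by apply: grid_mono.
  have -> : grid t0 D 1 = grid t0 D 0 + D by rewrite gridS.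
  lra.
have dk : (k.+1 <= d.-1)%N by rewrite -ltnS prednK // (leq_ltn_trans _ kd).
have [x1|x1] := leP (grid t0 D d.-1) x.
  rewrite big1; last first.
    move=> i _; rewrite /cwn (lt_geF x0) x1.
    have : (i < d.-1)%N by rewrite (leq_trans (ltn_ord i)).
    by move/ltn_eqF ->.
  rewrite hcl0 // pmulr_lle0 ?invr_gt0 // subr_le0 (le_trans _ x1) //.
  exact: grid_mono.
rewrite (eq_bigr (fun j : 'I_k.+1 => hcl ((grid t0 D (j : nat).+1 - x) / D) - hcl ((grid t0 D j - x) / D))); last first.
  by move=> i _; rewrite /cwn (lt_geF x0) (lt_geF x1); apply: inner_eq.
rewrite -(big_mkord xpredT (fun j => hcl ((grid t0 D j.+1 - x) / D) - hcl ((grid t0 D j - x) / D))).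
rewrite telescope_sumr // (hcl0 (z := (grid t0 D 0 - x) / D)) ?subr0 //.
rewrite pmulr_lle0 ?invr_gt0 // subr_le0; lra.
Qed.

Lemma sum_swap (R : realType) (I J : Type) (r1 : seq I) (r2 : seq J) (P : pred I) (Q : pred J) (F : I -> J -> R) :
  \sum_(i <- r1 | P i) \sum_(j <- r2 | Q j) F i j = \sum_(j <- r2 | Q j) \sum_(i <- r1 | P i) F i j.
Proof. exact: exchange_big. Qed.

Lemma jensen_seq (R : realType) (I : Type) (r : seq I) (w y : I -> R) :
  (forall i, 0 <= w i) -> \sum_(i <- r) w i <= 1 ->
  (\sum_(i <- r) w i * y i) ^+ 2 <= \sum_(i <- r) w i * y i ^+ 2.
Proof.
move=> w0 w1.
set M := \sum_(i <- r) w i * y i.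
have H : 0 <= \sum_(i <- r) w i * (y i - M) ^+ 2.
  by apply: sumr_ge0 => i _; apply: mulr_ge0 => //; apply: sqr_ge0.
have E : \sum_(i <- r) w i * (y i - M) ^+ 2 =
   \sum_(i <- r) w i * y i ^+ 2 - 2 * M * M + M ^+ 2 * \sum_(i <- r) w i.
  rewrite (eq_bigr (fun i => w i * y i ^+ 2 - (2 * M) * (w i * y i) + M ^+ 2 * w i)); last by move=> i _; ring.
  rewrite !big_split /= sumrN -!mulr_sumr -/M; ring.
rewrite E in H.
have W0 : 0 <= \sum_(i <- r) w i by apply: sumr_ge0.
have : M ^+ 2 * \sum_(i <- r) w i <= M ^+ 2 by rewrite ler_piMr ?sqr_ge0.
rewrite -mulrA -expr2 in H. lra.
Qed.

Lemma jensen2 (R : realType) (a x y : R) : 0 <= a <= 1 ->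
  ((1 - a) * x + a * y) ^+ 2 <= (1 - a) * x ^+ 2 + a * y ^+ 2.
Proof.
move=> /andP[a0 a1]; rewrite -subr_ge0.
have -> : (1 - a) * x ^+ 2 + a * y ^+ 2 - ((1 - a) * x + a * y) ^+ 2
  = a * (1 - a) * (x - y) ^+ 2 by ring.
by apply: mulr_ge0; [apply: mulr_ge0 => //; rewrite subr_ge0|apply: sqr_ge0].
Qed.

Lemma schur (R : realType) (n : nat) (A : nat -> nat -> R) (D : nat -> R) :
  (forall k l, 0 <= A k l) ->
  (forall k, \sum_(l < n) A k l <= 1) ->
  (forall l, \sum_(k < n) A k l <= 1) ->
  \sum_(k < n) (\sum_(l < n) A k l * D l) ^+ 2 <= \sum_(k < n) D k ^+ 2.
Proof.
move=> A0 Ar Ac.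
apply: (@le_trans _ _ (\sum_(k < n) \sum_(l < n) A k l * D l ^+ 2)).
  by apply: ler_sum => k _; apply: jensen_seq.
rewrite sum_swap /=; apply: ler_sum => l _.
rewrite -mulr_suml; rewrite ler_piMl ?sqr_ge0 //.
Qed.

Lemma abel (R : realType) (n : nat) (e G : nat -> R) :
  \sum_(l < n.+1) e l * G l =
  (\sum_(j < n.+1) e j) * G n +
  \sum_(l < n) (\sum_(j < l.+1) e j) * (G l - G l.+1).
Proof.
elim: n => [|n IH]; first by rewrite !big_ord1 big_ord0; ring.
rewrite big_ord_recr /= IH [in RHS]big_ord_recr /= [in X in _ = _ + X]big_ord_recr /=.
ring.
Qed.

Lemma shift_nat (R : realType) (t0 D b : R) (n : nat) (e : nat -> R) :
  0 < D -> \sum_(l < n.+1) e l = 0 ->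
  \sum_(k < n) (\sum_(l < n.+1) e l * hcl ((grid t0 D k.+1 - (b + grid t0 D l)) / D)) ^+ 2
  <= \sum_(k < n) (\sum_(j < k.+1) e j) ^+ 2.
Proof.
move=> D0 e0.
set G := fun k l : nat => hcl ((grid t0 D k.+1 - (b + grid t0 D l)) / D).
set A := fun k l : nat => G k l - G k l.+1.
set Dl := fun l : nat => \sum_(j < l.+1) e j.
have E : forall k, \sum_(l < n.+1) e l * G k l = \sum_(l < n) A k l * Dl l.
  move=> k; rewrite abel e0 mul0r add0r; apply: eq_bigr => l _; rewrite mulrC.
  by [].
rewrite (eq_bigr (fun k : 'I_n => (\sum_(l < n) A k l * Dl l) ^+ 2)); last first.
  by move=> k _; rewrite -E.
apply: schur.
- move=> k l; rewrite /A subr_ge0 /G; apply: hcl_mono.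
  rewrite ler_pM2r ?invr_gt0 //; have := @grid_mono R t0 D l l.+1 D0 (leqnSn l); lra.
- move=> k.
  have -> : \sum_(l < n) A k l = - \sum_(0 <= l < n) (G k l.+1 - G k l).
    rewrite big_mkord -sumrN; apply: eq_bigr => l _; rewrite /A; ring.
  rewrite telescope_sumr //.
  have := hcl_ge0 ((grid t0 D k.+1 - (b + grid t0 D n)) / D).
  have := hcl_le1 ((grid t0 D k.+1 - (b + grid t0 D 0)) / D).
  rewrite /G; lra.
- move=> l.
  set F := fun k : nat => hcl ((grid t0 D k - (b + grid t0 D l)) / D).
  have -> : \sum_(k < n) A k l = \sum_(0 <= k < n) (F k.+1 - F k).
    rewrite big_mkord; apply: eq_bigr => k _; rewrite /A /G /F.
    congr (_ - hcl _); rewrite !gridS; congr (_ / _); ring.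
  rewrite telescope_sumr //.
  have := hcl_ge0 ((grid t0 D 0 - (b + grid t0 D l)) / D).
  have := hcl_le1 ((grid t0 D n - (b + grid t0 D l)) / D).
  rewrite /F; lra.
Qed.

Definition Wk (R : realType) (d : nat) (t0 D x : R) (k : nat) : R :=
  \sum_(j < d | (j <= k)%N) cproj_w t0 D x j.

Lemma Wk_eq (R : realType) (d : nat) (t0 D x : R) (k : nat) : 0 < D -> (k.+1 < d)%N ->
  Wk d t0 D x k = hcl ((grid t0 D k.+1 - x) / D).
Proof.
move=> D0 kd; rewrite -(@W_eq R d t0 D x k D0 kd) /Wk (big_ord_widen _ (cwn d t0 D x) (ltnW kd)).
by apply: eq_bigl => j; rewrite ltnS.
Qed.

Lemma sum_widen_le (R : realType) (n k : nat) (F : nat -> R) : (k < n)%N ->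
  \sum_(j < n | (j <= k)%N) F j = \sum_(j < k.+1) F j.
Proof.
by move=> kn; rewrite (big_ord_widen _ _ kn); apply: eq_bigl => j; rewrite ltnS.
Qed.

Lemma shift_ord (R : realType) (d : nat) (t0 D b : R) (u v : 'I_d -> R) :
  0 < D -> \sum_i u i = \sum_i v i ->
  \sum_(k < d | (k < d.-1)%N)
     (\sum_(l < d) (u l - v l) * Wk d t0 D (b + grid t0 D l) k) ^+ 2
  <= \sum_(k < d | (k < d.-1)%N) (cdf u k - cdf v k) ^+ 2.
Proof.
case: d u v => [|n] u v D0 uv; first by rewrite !big_ord0.
set e := fun j : nat => u (inord j) - v (inord j).
have ee : forall l : 'I_n.+1, u l - v l = e l by move=> l; rewrite /e inord_val.
have L : \sum_(k < n.+1 | (k < n.+1.-1)%N)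
     (\sum_(l < n.+1) (u l - v l) * Wk n.+1 t0 D (b + grid t0 D l) k) ^+ 2
   = \sum_(k < n) (\sum_(l < n.+1) e l * hcl ((grid t0 D k.+1 - (b + grid t0 D l)) / D)) ^+ 2.
  rewrite (big_ord_widen _ (fun k : nat => (\sum_(l < n.+1) e l * hcl ((grid t0 D k.+1 - (b + grid t0 D l)) / D)) ^+ 2) (leqnSn n)).
  apply: eq_bigr => k /= kn; congr (_ ^+ 2); apply: eq_bigr => l _; rewrite ee Wk_eq //.
have Rr : \sum_(k < n.+1 | (k < n.+1.-1)%N) (cdf u k - cdf v k) ^+ 2
   = \sum_(k < n) (\sum_(j < k.+1) e j) ^+ 2.
  rewrite (big_ord_widen _ (fun k : nat => (\sum_(j < k.+1) e j) ^+ 2) (leqnSn n)).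
  apply: eq_bigr => k /= kn; congr (_ ^+ 2); rewrite /cdf.
  rewrite -(@sum_widen_le R n.+1 k (fun j => e j)) // -sumrB; apply: eq_bigr => j _; exact: ee.
rewrite L Rr.
apply: shift_nat => //.
rewrite (eq_bigr (fun l : 'I_n.+1 => u l - v l)); last by move=> l _; rewrite ee.
by rewrite sumrB uv subrr.
Qed.

Definition Qd (R : realType) (d : nat) (u v : 'I_d -> R) : R :=
  \sum_(k < d | (k < d.-1)%N) (cdf u k - cdf v k) ^+ 2.

Lemma Qd_ge0 (R : realType) (d : nat) (u v : 'I_d -> R) : 0 <= Qd u v.
Proof. by apply: sumr_ge0 => k _; apply: sqr_ge0. Qed.

Lemma cdf_Gop (R : realType) (m d : nat) (t0 D : R) (P : 'M[R]_m)
  (nuf : 'I_m -> 'I_m -> R -> R) (nus : 'I_m -> 'I_m -> seq R)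
  (p : 'I_m -> 'I_d -> R) i (k : 'I_d) :
  cdf (Gop t0 D P nuf nus p i) k =
  \sum_j P i j * \sum_(b <- nus i j) nuf i j b *
     \sum_(l < d) p j l * Wk d t0 D (b + grid t0 D l) k.
Proof.
rewrite /cdf /Gop sum_swap; apply: eq_bigr => j _; rewrite -mulr_sumr; congr (_ * _).
rewrite sum_swap; apply: eq_bigr => b _; rewrite sum_swap mulr_sumr.
apply: eq_bigr => l _; rewrite /Wk !mulr_sumr; apply: eq_bigr => j' _; ring.
Qed.

Lemma cdf_lin (R : realType) (d : nat) (a c : R) (u w : 'I_d -> R) (k : 'I_d) :
  cdf (fun l => a * u l + c * w l) k = a * cdf u k + c * cdf w k.
Proof. by rewrite /cdf big_split /= -!mulr_sumr. Qed.

Lemma core_G (R : realType) (m d : nat) (t0 D : R) (P : 'M[R]_m)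
  (nuf : 'I_m -> 'I_m -> R -> R) (nus : 'I_m -> 'I_m -> seq R)
  (p q : 'I_m -> 'I_d -> R) (B : R) :
  0 < D -> (forall i j, 0 <= P i j) -> (forall i, \sum_j P i j = 1) ->
  (forall i j b, 0 <= nuf i j b) -> (forall i j, \sum_(b <- nus i j) nuf i j b = 1) ->
  (forall j, \sum_l p j l = \sum_l q j l) ->
  (forall j, Qd (p j) (q j) <= B) ->
  forall i, Qd (Gop t0 D P nuf nus p i) (Gop t0 D P nuf nus q i) <= B.
Proof.
move=> D0 P0 P1 n0 n1 pq QB i.
set E := fun j b (k : 'I_d) => \sum_(l < d) (p j l - q j l) * Wk d t0 D (b + grid t0 D l) k.
have dif : forall k, cdf (Gop t0 D P nuf nus p i) k - cdf (Gop t0 D P nuf nus q i) k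
   = \sum_j P i j * \sum_(b <- nus i j) nuf i j b * E j b k.
  move=> k; rewrite !cdf_Gop -sumrB; apply: eq_bigr => j _; rewrite -mulrBr; congr (_ * _).
  rewrite -sumrB; apply: eq_bigr => b _; rewrite -mulrBr; congr (_ * _).
  rewrite -sumrB; apply: eq_bigr => l _; rewrite /E; ring.
rewrite /Qd (eq_bigr (fun k : 'I_d => (\sum_j P i j * \sum_(b <- nus i j) nuf i j b * E j b k) ^+ 2)); last by move=> k _; rewrite dif.
apply: (@le_trans _ _ (\sum_(k < d | (k < d.-1)%N) \sum_j P i j * \sum_(b <- nus i j) nuf i j b * E j b k ^+ 2)).
  apply: ler_sum => k _.
  apply: le_trans; first by apply: jensen_seq => //; rewrite P1.
  apply: ler_sum => j _; apply: ler_wpM2l => //; by apply: jensen_seq => //; rewrite n1.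
rewrite sum_swap /=.
apply: (@le_trans _ _ (\sum_j P i j * B)); last by rewrite -mulr_suml P1 mul1r.
apply: ler_sum => j _; rewrite -mulr_sumr; apply: ler_wpM2l => //.
rewrite sum_swap /=.
apply: (@le_trans _ _ (\sum_(b <- nus i j) nuf i j b * B)); last by rewrite -mulr_suml n1 mul1r.
apply: ler_sum => b _; rewrite -mulr_sumr; apply: ler_wpM2l => //.
apply: le_trans (QB j); exact: shift_ord.
Qed.

Lemma core_h (R : realType) (m d : nat) (t0 D : R) (P : 'M[R]_m)
  (nuf : 'I_m -> 'I_m -> R -> R) (nus : 'I_m -> 'I_m -> seq R) (rho : 'I_m -> R)
  (p q : 'I_m -> 'I_d -> R) (B : R) :
  0 < D -> (forall i j, 0 <= P i j) -> (forall i, \sum_j P i j = 1) ->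
  (forall i j b, 0 <= nuf i j b) -> (forall i j, \sum_(b <- nus i j) nuf i j b = 1) ->
  (forall i, 0 <= rho i <= 1) ->
  (forall j, \sum_l p j l = \sum_l q j l) ->
  (forall j, Qd (p j) (q j) <= B) ->
  forall i, Qd (hrho t0 D P nuf nus rho p i) (hrho t0 D P nuf nus rho q i) <= B.
Proof.
move=> D0 P0 P1 n0 n1 r01 pq QB i.
have G := @core_G R m d t0 D P nuf nus p q B D0 P0 P1 n0 n1 pq QB i.
rewrite /Qd /hrho.
apply: (@le_trans _ _ ((1 - rho i) * Qd (p i) (q i) + rho i * Qd (Gop t0 D P nuf nus p i) (Gop t0 D P nuf nus q i))).
  rewrite /Qd !mulr_sumr -big_split /=; apply: ler_sum => k _.
  rewrite !cdf_lin.
  have -> : (1 - rho i) * cdf (p i) k + rho i * cdf (Gop t0 D P nuf nus p i) k -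
    ((1 - rho i) * cdf (q i) k + rho i * cdf (Gop t0 D P nuf nus q i) k)
    = (1 - rho i) * (cdf (p i) k - cdf (q i) k) + rho i * (cdf (Gop t0 D P nuf nus p i) k - cdf (Gop t0 D P nuf nus q i) k) by ring.
  exact: jensen2.
have /andP[r0 r1] := r01 i.
have := QB i.
have : rho i * Qd (Gop t0 D P nuf nus p i) (Gop t0 D P nuf nus q i) <= rho i * B by apply: ler_wpM2l.
have : (1 - rho i) * Qd (p i) (q i) <= (1 - rho i) * B by apply: ler_wpM2l; rewrite ?subr_ge0 // QB.
lra.
Qed.

Lemma sum_uniq_supp (R : realType) (T : eqType) (s1 s2 : seq T) (g : T -> R) :
  uniq s1 -> uniq s2 -> (forall x, x \notin s1 -> g x = 0) ->
  (forall x, x \notin s2 -> g x = 0) ->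
  \sum_(x <- s1) g x = \sum_(x <- s2) g x.
Proof.
move=> u1 u2 h1 h2.
have E1 : \sum_(x <- s1) g x = \sum_(x <- s1 | x \in s2) g x.
  rewrite [RHS]big_mkcond. apply: eq_bigr. move=> x _. case: ifP. by []. move=> /negbT h. exact: h2.
have E2 : \sum_(x <- s2) g x = \sum_(x <- s2 | x \in s1) g x.
  rewrite [RHS]big_mkcond. apply: eq_bigr. move=> x _. case: ifP. by []. move=> /negbT h. exact: h1.
rewrite E1 E2 -(big_filter s1) -(big_filter s2). apply: perm_big. apply: uniq_perm.
- exact: filter_uniq.
- exact: filter_uniq.
- by move=> x; rewrite !mem_filter andbC.
Qed.

Lemma part1 (R : realType) (m d : nat) (t0 D : R) (P : 'M[R]_m)
  (nuf : 'I_m -> 'I_m -> R -> R) (nus : 'I_m -> 'I_m -> seq R) (rho : 'I_m -> R) :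
  (forall i, \sum_j P i j = 1) ->
  (forall i j, \sum_(b <- nus i j) nuf i j b = 1) ->
  (forall i j, uniq (nus i j)) ->
  (forall i j b, b \notin nus i j -> nuf i j b = 0) ->
  forall qY sY, Y_law rho P nuf qY sY ->
  forall p : 'I_m -> 'I_d -> R,
  forall u k, EH t0 D qY sY p u k = hrho t0 D P nuf nus rho p u k.
Proof.
move=> P1 n1 nU nZ qY sY [uS qz q0 q1 qE] p u k.
set g := fun y => qY y * (Hbackup t0 D p y u k - p u k).
have E0 : EH t0 D qY sY p u k = p u k + \sum_(y <- sY) g y.
  rewrite /EH (eq_bigr (fun y => p u k * qY y + g y)); last by move=> y _; rewrite /g; ring.
  by rewrite big_split /= -mulr_sumr q1 mulr1.
set T := [seq (u, b, j) | j <- index_enum 'I_m, b <- nus u j].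
have ET : \sum_(y <- sY) g y = \sum_(y <- T) g y.
  apply: sum_uniq_supp => //.
  - apply: allpairs_uniq_dep => //; first exact: index_enum_uniq.
    by move=> [j1 b1] [j2 b2] _ _ /= [-> ->].
  - by move=> y /qz; rewrite /g => ->; rewrite mul0r.
  - move=> [[s b] j] yT; rewrite /g /Hbackup.
    case: (eqVneq u s) => [us|_]; last by rewrite subrr mulr0.
    subst s.
    rewrite qE nZ ?mulr0 ?mul0r //.
    apply: contra yT => bn; apply/allpairsPdep; exists j, b; split => //.
    exact: mem_index_enum.
have G_eq : Gop t0 D P nuf nus p u k =
    \sum_j P u j * \sum_(b <- nus u j) nuf u j b * Lb t0 D b (p j) k.
  rewrite /Gop; apply: eq_bigr => j _; congr (_ * _); apply: eq_bigr => b _.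
  rewrite /Lb mulr_sumr; apply: eq_bigr => l _; rewrite addrC; ring.
have S : \sum_(y <- T) g y = rho u * (Gop t0 D P nuf nus p u k - p u k).
  rewrite big_allpairs_dep /= G_eq.
  rewrite (eq_bigr (fun j : 'I_m => rho u * (P u j * \sum_(b <- nus u j) nuf u j b * Lb t0 D b (p j) k) - rho u * p u k * P u j)).
    by rewrite sumrB -!mulr_sumr P1; ring.
  move=> j _.
  rewrite (eq_bigr (fun b => rho u * P u j * (nuf u j b * Lb t0 D b (p j) k) - rho u * P u j * p u k * nuf u j b)).
    by rewrite sumrB -!mulr_sumr n1 mulr1; ring.
  by move=> b _; rewrite /g /Hbackup eqxx qE; ring.
by rewrite E0 ET S /hrho; ring.
Qed.

Lemma part3 (R : realType) (m d : nat) (t0 D : R) (P : 'M[R]_m)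
  (nuf : 'I_m -> 'I_m -> R -> R) (nus : 'I_m -> 'I_m -> seq R) (rho : 'I_m -> R) :
  (forall i, 0 < rho i) ->
  forall p : 'I_m -> 'I_d -> R,
  is_fix (hrho t0 D P nuf nus rho) p <-> is_fix (Gop t0 D P nuf nus) p.
Proof.
move=> r0 p; split => H i k; have := H i k; rewrite /hrho.
  move=> E; have : rho i * (Gop t0 D P nuf nus p i k - p i k) = 0 by rewrite -[RHS](subrr (p i k)) -{2}E; ring.
  by move/eqP; rewrite mulf_eq0 gt_eqF //= subr_eq0 => /eqP.
by move=> ->; ring.
Qed.

Lemma lCinf_le (R : realType) (m d : nat) (D : R) (p q p' q' : 'I_m -> 'I_d -> R) :
  0 < D ->
  (forall B, (forall j, Qd (p j) (q j) <= B) -> forall i, Qd (p' i) (q' i) <= B) ->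
  lCinf D p' q' <= lCinf D p q.
Proof.
move=> D0 H.
set M := lCinf D p q.
have M0 : 0 <= M by apply: bigmax_ge_id.
have hj : forall j, lC D (p j) (q j) <= M by move=> j; apply: le_bigmax.
have QB : forall j, Qd (p j) (q j) <= M ^+ 2 / D.
  move=> j; rewrite ler_pdivlMr // mulrC.
  have s0 : 0 <= D * Qd (p j) (q j) by apply: mulr_ge0; [exact: ltW | exact: Qd_ge0].
  rewrite -(sqr_sqrtr s0) expr2 [M ^+ 2]expr2.
  apply: ler_pM => //; [exact: sqrtr_ge0 | exact: sqrtr_ge0 | exact: hj | exact: hj].
apply: bigmax_le => // i _.
have := H _ QB i => Hi.
rewrite /lC -[X in _ <= X]ger0_norm // -sqrtr_sqr ler_sqrt ?sqr_ge0 //.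
rewrite -/(Qd (p' i) (q' i)).
by rewrite -ler_pdivlMl // mulrC.
Qed.

Lemma prob_le1 (R : realType) (m : nat) (rho : 'I_m -> R) :
  prob_vec rho -> forall i, 0 <= rho i <= 1.
Proof.
move=> [r0 r1] i; rewrite r0 /= -r1 (bigD1 i) //= lerDl.
by apply: sumr_ge0 => j _.
Qed.

Lemma mxpowS (R : realType) m (P : 'M[R]_m) n i j :
  (P ^+ n.+1) i j = \sum_k (P ^+ n) i k * P k j.
Proof. by rewrite exprSr -mulmxE mxE. Qed.
Lemma mxpow0 (R : realType) m (i j : 'I_m) : ((1 : 'M[R]_m) i j) = (i == j)%:R.
Proof. by rewrite mxE. Qed.

Lemma mu_pos (R : realType) (m : nat) (P : 'M[R]_m) (mu : 'I_m -> R) :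
  stochastic P -> irreducible P -> stationary P mu -> forall i, 0 < mu i.
Proof.
move=> [P0 P1] irr [[m0 m1] st].
have pw0 : forall n i j, 0 <= (P ^+ n) i j.
  elim=> [|n IH] i j; first by rewrite expr0 mxpow0 ler0n.
  by rewrite mxpowS; apply: sumr_ge0 => k _; apply: mulr_ge0.
have pst : forall n j, \sum_i mu i * (P ^+ n) i j = mu j.
  elim=> [|n IH] j.
    rewrite (bigD1 j) //= expr0 mxpow0 eqxx mulr1 big1 ?addr0 //.
    by move=> i /negbTE ij; rewrite mxpow0 ij mulr0.
  rewrite -st.
  under eq_bigr do rewrite mxpowS mulr_sumr.
  rewrite sum_swap; apply: eq_bigr => k _; rewrite -IH mulr_suml.
  by apply: eq_bigr => i _; rewrite mulrA.
have [i0 Hi0] : exists i0, 0 < mu i0.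
  case: (pickP (fun i => 0 < mu i)) => [i0 /= H|H]; first by exists i0.
  exfalso; have : \sum_i mu i = 0.
    apply: big1 => i _; have := H i; have := m0 i; rewrite /=; lra.
  by rewrite m1 => /eqP; rewrite oner_eq0.
move=> j; have [n Hn] := irr i0 j.
rewrite -(pst n j) (bigD1 i0) //=.
have : 0 <= \sum_(i < m | i != i0) mu i * (P ^+ n) i j by apply: sumr_ge0 => i _; apply: mulr_ge0.
have := mulr_gt0 Hi0 Hn. lra.
Qed.

Lemma concl_gen (R : realType) (m d : nat) (t0 D : R) (P : 'M[R]_m)
  (nuf : 'I_m -> 'I_m -> R -> R) (nus : 'I_m -> 'I_m -> seq R) (rho : 'I_m -> R) :
  0 < D -> stochastic P ->
  (forall i j b, 0 <= nuf i j b) ->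
  (forall i j, \sum_(b <- nus i j) nuf i j b = 1) ->
  (forall i j, uniq (nus i j)) ->
  (forall i j b, b \notin nus i j -> nuf i j b = 0) ->
  prob_vec rho -> (forall i, 0 < rho i) ->
  prop5_concl d t0 D P nuf nus rho.
Proof.
move=> D0 [P0 P1] n0 n1 nU nZ pr rpos; split.
- move=> qY sY Y p _ u k; exact: part1.
- move=> p q sp sq; apply: lCinf_le => // B QB i.
  apply: core_h => //; first exact: prob_le1.
  by move=> j; case: (sp j) => _ ->; case: (sq j) => _ ->.
- move=> p _; exact: part3.
Qed.

Unset Implicit Arguments.

Theorem proposition5 (R : realType) (m d : nat) (theta0 Delta : R)
  (P : 'M[R]_m) (mu : 'I_m -> R)
  (f : 'I_m -> 'I_m -> R -> R) (s : 'I_m -> 'I_m -> seq R) :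
  0 < Delta ->
  stochastic P -> irreducible P -> aperiodic P -> stationary P mu ->
  (forall i j, fin_law (f i j) (s i j)) ->
  (forall i j x, x \in s i j -> 0 <= x <= 1) ->
  let rbar := gain P mu f s in
  let nuf := fun i j => nu_mass (f i j) rbar in
  let nus := fun i j => nu_supp (s i j) rbar in
  (forall rho : 'I_m -> R, prob_vec rho -> (forall i, 0 < rho i) ->
     prop5_concl d theta0 Delta P nuf nus rho)
  /\ prop5_concl d theta0 Delta P nuf nus mu.
Proof.
move=> D0 sto irr _ stat fl _ rbar nuf nus.
have n0 : forall i j b, 0 <= nuf i j b.
  by move=> i j b; case: (fl i j) => _ _ h _; exact: h.
have n1 : forall i j, \sum_(b <- nus i j) nuf i j b = 1.
  move=> i j; rewrite /nus /nu_supp big_map /nuf /nu_mass.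
  case: (fl i j) => _ _ _ <-; apply: eq_bigr => x _; by rewrite subrK.
have nU : forall i j, uniq (nus i j).
  move=> i j; rewrite /nus /nu_supp map_inj_uniq; first by case: (fl i j).
  exact: addIr.
have nZ : forall i j b, b \notin nus i j -> nuf i j b = 0.
  move=> i j b bn; rewrite /nuf /nu_mass; case: (fl i j) => _ hz _ _; apply: hz.
  apply: contra bn => H; rewrite /nus /nu_supp.
  by rewrite -[b](addrK rbar); apply: map_f.
have gen : forall rho : 'I_m -> R, prob_vec rho -> (forall i, 0 < rho i) ->
     prop5_concl d theta0 Delta P nuf nus rho.
  by move=> rho pr rp; apply: concl_gen.
split => //; apply: gen; first by case: stat.
exact: mu_pos sto irr stat.
Qed.
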